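(* Let $f,g_1,\dots,g_m,h_1,\dots,h_l\in\mathbb{R}[\mathbf{x}]$ and consider the POP of minimizing $f$ over $S(g)\cap V(h)$. If for every integer $k\ge k_{\min}$ the linear program $(\mathrm{LP}_k)$ has a feasible solution $(\xi_k,(\mathbf{G}_{i,k})_{i\in\{0\}\cup[m]},(\mathbf{u}_{j,k})_{j\in[l]})$, then the POP has the constant trace property with $a_k=\xi_k$ and $\mathbf{P}_k=\mathrm{diag}(\mathbf{G}_{0,k}^{1/2},\dots,\mathbf{G}_{m,k}^{1/2})$ for every $k\ge k_{\min}$.
   Context: $\mathbf{x}=(x_1,\dots,x_n)$; $\lceil p\rceil:=\lceil\deg(p)/2\rceil$; $\mathbb{N}^n_d:=\{\alpha\in\mathbb{N}^n:|\alpha|\le d\}$; $s(d):=\binom{n+d}{n}$; $\mathbf{v}_d=(\mathbf{x}^\alpha)_{\alpha\in\mathbb{N}^n_d}$; $S(g)=\{\mathbf{x}:g_i(\mathbf{x})\ge0\}$, $V(h)=\{\mathbf{x}:h_j(\mathbf{x})=0\}$; $k_{\min}:=\max\{\lceil f\rceil,\lceil g_i\rceil,\lceil h_j\rceil\}$. $(\mathrm{LP}_k)$: minimize $\xi$ over $\xi\in\mathbb{R}$, real diagonal matrices $\mathbf{G}_0$ of size $s(k)$ and $\mathbf{G}_i$ of size $s(k-\lceil g_i\rceil)$ ($i\in[m]$), and vectors $\mathbf{u}_j\in\mathbb{R}^{s(2(k-\lceil h_j\rceil))}$, subject to $\mathbf{G}_i-\mathbf{I}\succeq0$ for $i\in\{0\}\cup[m]$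 ($\mathbf{I}$ the identity of the corresponding size) and the polynomial identity $\xi=\mathbf{v}_k^\top\mathbf{G}_0\mathbf{v}_k+\sum_{i\in[m]}g_i\mathbf{v}_{k-\lceil g_i\rceil}^\top\mathbf{G}_i\mathbf{v}_{k-\lceil g_i\rceil}+\sum_{j\in[l]}h_j\mathbf{v}_{2(k-\lceil h_j\rceil)}^\top\mathbf{u}_j$. Moment/localizing matrices for $\mathbf{y}=(y_\alpha)_{\alpha\in\mathbb{N}^n_{2k}}$: $\mathbf{M}_d(\mathbf{y})=(y_{\alpha+\beta})_{\alpha,\beta\in\mathbb{N}^n_d}$, $\mathbf{M}_d(q\mathbf{y})=(\sum_\gamma q_\gamma y_{\alpha+\beta+\gamma})_{\alpha,\beta\in\mathbb{N}^n_d}$. $\mathcal{S}_k$: real symmetric block-diagonal matrices $\mathrm{diag}(\mathbf{X}_0,\dots,\mathbf{X}_m)$, $\mathbf{X}_0$ of size $s(k)$, $\mathbf{X}_i$ of size $s(k-\lceil g_i\rceil)$; $\mathbf{D}_k(\mathbf{y}):=\mathrm{diag}(\mathbf{M}_k(\mathbf{y}),\mathbf{M}_{k-\lceil g_1\rceil}(g_1\mathbf{y}),\dots,\mathbf{M}_{k-\lceil g_m\rceil}(g_m\mathbf{y}))$. CTP with constants $a_k>0$ and positive definite $\mathbf{P}_k\in\mathcal{S}_k$ means: every $\mathbf{y}\in\mathbb{R}^{s(2k)}$ with $\mathbf{M}_{k-\lceil h_j\rceil}(h_j\mathbf{y})=0$ ($j\in[l]$) and $y_{\mathbf{0}}=1$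 satisfies $\mathrm{trace}(\mathbf{P}_k\mathbf{D}_k(\mathbf{y})\mathbf{P}_k)=a_k$, for all $k\ge k_{\min}$. *)

(* Defs.v *)
(* MathComp + multinomials (mpoly).  Real numbers: an arbitrary real
   closed field R (the statement is purely algebraic; R = the reals is a special case). *)
From HB Require Import structures.
From mathcomp Require Import all_boot all_order all_algebra.
From mathcomp Require Import mpoly.
Set Implicit Arguments. Unset Strict Implicit. Unset Printing Implicit Defensive.
Import Order.TTheory GRing.Theory Num.Theory.
Local Open Scope ring_scope.

Section POP.
Variables (R : rcfType) (n : nat).
Local Notation poly := {mpoly R[n]}.

(* deg(p) = largest total degree of a monomial of p (deg 0 := 0) *)
Definition pdeg (p : poly) : nat := (msize p).-1.
Definition hdeg (p : poly) : nat := uphalf (pdeg p).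

(* N^n_d is 'X_{1..n < d.+1}; s(d) = #|N^n_d| *)
Definition sdim (d : nat) : nat := #|{: 'X_{1..n < d.+1}}|.
(* the monomial exponent alpha indexing row/column i of a matrix of size s(d) *)
Definition mon (d : nat) (i : 'I_(sdim d)) : 'X_{1..n} :=
  bmnm (@enum_val _ (mem {: 'X_{1..n < d.+1}}) i).

Definition quadp d (G : 'M[R]_(sdim d)) : poly :=
  \sum_(i < sdim d) \sum_(j < sdim d) G i j *: 'X_[mon i + mon j].
Definition linp d (u : 'cV[R]_(sdim d)) : poly :=
  \sum_(i < sdim d) u i 0 *: 'X_[mon i].

Definition psd m (A : 'M[R]_m) : Prop :=
  A^T = A /\ forall v : 'cV[R]_m, 0 <= (v^T *m A *m v) 0 0.
Definition pd m (A : 'M[R]_m) : Prop :=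
  A^T = A /\ forall v : 'cV[R]_m, v != 0 -> 0 < (v^T *m A *m v) 0 0.

Definition sqrt_diag m (G : 'M[R]_m) : 'M[R]_m :=
  diag_mx (\row_j Num.sqrt (G j j)).

Variables (m l : nat) (f : poly) (g : 'I_m -> poly) (h : 'I_l -> poly).

(* blocks indexed by {0} \cup [m]: block 0 uses the polynomial 1 (so that
   M_k(1 y) = M_k(y)), block i+1 uses g_{i+1} *)
Definition gx (i : 'I_m.+1) : poly :=
  if unlift ord0 i is Some i' then g i' else 1.
Definition cg (i : 'I_m.+1) : nat :=
  if unlift ord0 i is Some i' then hdeg (g i') else 0%N.

Definition kmin : nat :=
  maxn (hdeg f) (maxn (\max_(i < m) hdeg (g i)) (\max_(j < l) hdeg (h j))).

Definition LP_feasible (k : nat) (xi : R)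
  (G : forall i : 'I_m.+1, 'M[R]_(sdim (k - cg i)))
  (u : forall j : 'I_l, 'cV[R]_(sdim (2 * (k - hdeg (h j))))) : Prop :=
  [/\ forall i, is_diag_mx (G i),
      forall i, psd (G i - 1%:M) &
      xi%:MP = \sum_(i < m.+1) gx i * quadp (G i)
               + \sum_(j < l) h j * linp (u j)].

(* y in R^{s(2k)}, indexed by N^n_{2k}; extended by 0 (values outside N^n_{2k}
   are never used below because of degree bounds) *)
Definition yext k (y : 'X_{1..n < (2 * k).+1} -> R) (a : 'X_{1..n}) : R :=
  odflt 0 (omap y (insub a)).

Definition locmx k (y : 'X_{1..n < (2 * k).+1} -> R) d (q : poly)
  : 'M[R]_(sdim d) :=
  \matrix_(i, j) \sum_(c <- msupp q) q@_c * yext y (mon i + mon j + c).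

Definition Dmx k (y : 'X_{1..n < (2 * k).+1} -> R)
  : 'M[R]_(\sum_(i < m.+1) sdim (k - cg i)) :=
  \mxdiag_(i < m.+1) locmx y (k - cg i) (gx i).

Definition CTP (a : nat -> R)
  (P : forall k, 'M[R]_(\sum_(i < m.+1) sdim (k - cg i))) : Prop :=
  forall k, (kmin <= k)%N ->
    [/\ 0 < a k, pd (P k) &
      forall y : 'X_{1..n < (2 * k).+1} -> R,
        (forall j : 'I_l, locmx y (k - hdeg (h j)) (h j) = 0) ->
        yext y 0%MM = 1 ->
        \tr (P k *m Dmx y *m P k) = a k].

End POP.

Arguments LP_feasible {R n m l} g h k xi G u.
Arguments CTP {R n m l} f g h a P.
Arguments kmin {R n m l} f g h.

(* Main.v *)
Require Import Defs.
From HB Require Import structures.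
From mathcomp Require Import all_boot all_order all_algebra.
From mathcomp Require Import ssrcomplements mpoly.
Import Order.TTheory GRing.Theory Num.Theory.
Local Open Scope ring_scope.
Set Implicit Arguments. Unset Strict Implicit.

Lemma mon_surj (n d : nat) (a : 'X_{1..n}) : (mdeg a <= d)%N ->
  exists i : 'I_(sdim n d), mon i = a.
Proof.
move=> ha.
have hb : (mdeg a < d.+1)%N by [].
exists (enum_rank (BMultinom hb)).
by rewrite /mon enum_rankK.
Qed.

Lemma mon_deg (n d : nat) (i : 'I_(sdim n d)) : (mdeg (mon i) <= d)%N.
Proof. rewrite /mon; case: (enum_val i) => /= a ha; exact: ha. Qed.

Lemma msplit (n : nat) (N : nat) : forall (b : 'X_{1..n}) d1 d2,
  (mdeg b <= N)%N -> (mdeg b <= d1 + d2)%N ->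
  exists a1 a2, [/\ b = (a1 + a2)%MM, (mdeg a1 <= d1)%N & (mdeg a2 <= d2)%N].
Proof.
elim: N => [|N IH] b d1 d2.
  rewrite leqn0 => /eqP hb _; exists 0%MM, 0%MM.
  have /eqP -> : b == 0%MM by rewrite -mdeg_eq0 hb.
  by rewrite addm0 mdeg0.
move=> hbN hbd.
have [b0|bn0] := eqVneq b 0%MM.
  by exists 0%MM, 0%MM; rewrite b0 addm0 mdeg0.
have [i hi] : exists i, (0 < b i)%N.
  case: (pickP (fun i => 0 < b i)%N) => [i hi|hall]; first by exists i.
  case/eqP: bn0; apply/mnmP => i; rewrite mnm0E; have := hall i.
  by rewrite lt0n => /negbFE/eqP.
have hle : (U_(i) <= b)%MM.
  by apply/mnm_lepP => j; rewrite mnm1E; case: eqP => // <-.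
have bE : b = (b - U_(i) + U_(i))%MM by rewrite submK.
have hdeg : mdeg b = (mdeg (b - U_(i))%MM).+1 by rewrite {1}bE mdegD mdeg1 addn1.
case: d1 hbd => [|d1] hbd.
  case: d2 hbd => [|d2] hbd; first by rewrite hdeg in hbd.
  have [a1 [a2 [e h1 h2]]] := IH (b - U_(i))%MM 0%N d2 ltac:(by rewrite -ltnS -hdeg) ltac:(by rewrite -ltnS -hdeg).
  exists a1, (a2 + U_(i))%MM; split => //.
    by rewrite {1}bE e addmA.
  by rewrite mdegD mdeg1 addn1.
have [a1 [a2 [e h1 h2]]] := IH (b - U_(i))%MM d1 d2 ltac:(by rewrite -ltnS -hdeg) ltac:(by rewrite -ltnS -hdeg).
exists (a1 + U_(i))%MM, a2; split => //.
  by rewrite {1}bE e -addmA [(a2 + _)%MM]addmC addmA.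
by rewrite mdegD mdeg1 addn1.
Qed.
Section Lf.
Context (R : comRingType) (n : nat) (Y : 'X_{1..n} -> R).
Implicit Types p q : {mpoly R[n]}.

Definition Lf p := \sum_(c <- msupp p) p@_c * Y c.

Lemma LfE p i : (msize p <= i)%N -> Lf p = \sum_(m : 'X_{1..n < i}) p@_m * Y m.
Proof.
move=> le_pi; set I : subFinType _ := 'X_{1..n < i}.
rewrite /Lf (big_mksub I) ?msupp_uniq //=; first last.
  by move=> x /msize_mdeg_lt /leq_trans; apply.
rewrite big_rmcond //= => j /memN_msupp_eq0 ->.
by rewrite mul0r.
Qed.

Lemma LfD p q : Lf (p + q) = Lf p + Lf q.
Proof.
set i := (msize p + msize q + msize (p + q))%N.
have h1 : (msize p <= i)%N by rewrite /i -addnA leq_addr.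
have h2 : (msize q <= i)%N by rewrite /i addnAC leq_addl.
have h3 : (msize (p + q) <= i)%N by rewrite /i leq_addl.
rewrite !(@LfE _ i) //.
by rewrite -big_split /=; apply: eq_bigr => c _; rewrite mcoeffD mulrDl.
Qed.

Lemma Lf0 : Lf 0 = 0.
Proof. by rewrite /Lf msupp0 big_nil. Qed.

Lemma Lf_sum (I : Type) (r : seq I) (P : pred I) (F : I -> {mpoly R[n]}) :
  Lf (\sum_(i <- r | P i) F i) = \sum_(i <- r | P i) Lf (F i).
Proof. exact: (big_morph Lf LfD Lf0). Qed.

Lemma LfZ c p : Lf (c *: p) = c * Lf p.
Proof.
set i := (msize p + msize (c *: p))%N.
rewrite !(@LfE _ i) ?/i ?leq_addl ?leq_addr // mulr_sumr.
by apply: eq_bigr => m _; rewrite mcoeffZ mulrA.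
Qed.

Lemma LfX m : Lf 'X_[m] = Y m.
Proof. by rewrite /Lf msuppX big_seq1 mcoeffX eqxx mul1r. Qed.

Lemma LfC c : Lf c%:MP = c * Y 0%MM.
Proof. by rewrite -[c%:MP]mulr1 mul_mpolyC -mpolyX0 LfZ LfX. Qed.

Lemma LfXM a q : Lf ('X_[a] * q) = \sum_(c <- msupp q) q@_c * Y (a + c)%MM.
Proof.
rewrite {1}(mpolyE q) mulr_sumr Lf_sum; apply: eq_bigr => c _.
by rewrite -scalerAr -mpolyXD LfZ LfX.
Qed.
End Lf.
Section M.
Context (R : rcfType).

Lemma quad_delta s (A : 'M[R]_s) (a : 'I_s) :
  ((@delta_mx R s 1 a ord0)^T *m A *m @delta_mx R s 1 a ord0) ord0 ord0 = A a a.
Proof.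
by rewrite trmx_delta -rowE -colE !mxE.
Qed.

Lemma diag_ge1 s (A : 'M[R]_s) : psd (A - 1%:M) -> forall a, 1 <= A a a.
Proof.
move=> [_ H] a; have := H (delta_mx a 0); rewrite quad_delta !mxE eqxx mulr1n.
by rewrite subr_ge0.
Qed.

Lemma pd_diag s (w : 'rV[R]_s) : (forall k, 0 < w 0 k) -> pd (diag_mx w).
Proof.
move=> hw; split; first exact: tr_diag_mx.
move=> v vn0.
have [k hk] : exists k, v k 0 != 0.
  case: (pickP (fun k => v k 0 != 0)) => [k hk|hall]; first by exists k.
  case/eqP: vn0; apply/matrixP => i j; rewrite ord1 mxE; have := hall i.
  by move/negbFE/eqP.
rewrite mul_mx_diag mxE (bigD1 k) //= ltr_pwDl //.
  rewrite !mxE mulrAC -expr2 mulr_gt0 //.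
  by rewrite lt0r sqr_ge0 andbT sqrf_eq0.
apply: sumr_ge0 => i _; rewrite !mxE mulrAC -expr2 mulr_ge0 ?sqr_ge0 //.
exact: ltW.
Qed.

Lemma tr_sandwich s (d : 'rV[R]_s) (M : 'M[R]_s) :
  \tr (diag_mx d *m M *m diag_mx d) = \sum_a d 0 a ^+ 2 * M a a.
Proof.
rewrite mul_mx_diag mul_diag_mx /mxtrace; apply: eq_bigr => a _.
by rewrite !mxE expr2 mulrAC.
Qed.

Lemma tr_mxdiag3 p (p_ : 'I_p -> nat) (S M : forall i, 'M[R]_(p_ i)) :
  \tr (\mxdiag_i S i *m \mxdiag_i M i *m \mxdiag_i S i) = \sum_i \tr (S i *m M i *m S i).
Proof.
rewrite {2}/mxdiag mul_mxdiag_mxblock mul_mxblock_mxdiag mxtrace_mxblock.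
by apply: eq_bigr => i _; rewrite eqxx conform_mx_id.
Qed.

Lemma quadp_diag n d (G : 'M[R]_(sdim n d)) : is_diag_mx G ->
  quadp G = \sum_a G a a *: 'X_[mon a + mon a].
Proof.
move/is_diag_mxP => hG; rewrite /quadp; apply: eq_bigr => a _.
rewrite (bigD1 a) //= big1 ?addr0 // => b hb.
by rewrite hG ?scale0r // eq_sym.
Qed.
End M.

Theorem lemma2 (R : rcfType) (n m l : nat) (f : {mpoly R[n]})
    (g : 'I_m -> {mpoly R[n]}) (h : 'I_l -> {mpoly R[n]})
    (xi : nat -> R)
    (G : forall (k : nat) (i : 'I_m.+1), 'M[R]_(sdim n (k - cg g i)))
    (u : forall (k : nat) (j : 'I_l), 'cV[R]_(sdim n (2 * (k - hdeg (h j))))) :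
  (exists x : 'I_n -> R,
      (forall i, 0 <= (g i).@[x]) /\ (forall j, (h j).@[x] = 0)) ->
  (forall k, (kmin f g h <= k)%N -> LP_feasible g h k (xi k) (G k) (u k)) ->
  CTP f g h xi (fun k => \mxdiag_(i < m.+1) sqrt_diag (G k i)).
Proof.
move=> [x [hgx hhx]] hLP k hk.
have [hdiag hpsd hid] := hLP k hk.
have hG1 := fun i => diag_ge1 (hpsd i).
have hG0 : forall i a, 0 <= G k i a a by move=> i a; exact: le_trans ler01 (hG1 i a).
have gx0 : gx g ord0 = 1 by rewrite /gx unlift_none.
have gxS : forall i, gx g (lift ord0 i) = g i by move=> i; rewrite /gx liftK.
split.
- pose Q i := (quadp (G k i)).@[x].
  have hQ : forall i, Q i = \sum_a G k i a a * ('X_[mon a].@[x] ^+ 2).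
    move=> i; rewrite /Q quadp_diag // (big_morph _ (mevalD x) (meval0 x)); apply: eq_bigr => a _.
    by rewrite -mul_mpolyC !mevalM mevalC mpolyXD mevalM expr2.
  have hQp : forall i, 0 <= Q i.
    by move=> i; rewrite hQ; apply: sumr_ge0 => a _; rewrite mulr_ge0 ?sqr_ge0.
  have hQ0 : 1 <= Q ord0.
    have [a0 ha0] := @mon_surj n (k - cg g ord0) 0%MM ltac:(by rewrite mdeg0).
    rewrite hQ (bigD1 a0) //= ha0 mpolyX0 meval1 expr1n mulr1.
    apply: le_trans (hG1 _ a0) _; rewrite lerDl.
    by apply: sumr_ge0 => a _; rewrite mulr_ge0 ?sqr_ge0.
  have := congr1 (meval x) hid.
  rewrite mevalC mevalD !(big_morph _ (mevalD x) (meval0 x)) /= big_ord_recl gx0 mul1r.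
  rewrite [\sum_(j < l) _]big1 ?addr0; last by move=> j _; rewrite mevalM hhx mul0r.
  move=> ->.
  apply: lt_le_trans ltr01 _; apply: le_trans hQ0 _; rewrite lerDl.
  apply: sumr_ge0 => i _; rewrite gxS mevalM mulr_ge0 //.
  exact: (hQp (lift ord0 i)).
- rewrite /sqrt_diag -diag_mxrow; apply: pd_diag => s; rewrite !mxE.
  by rewrite sqrtr_gt0 (lt_le_trans ltr01 (hG1 _ _)).
- move=> y hy hy0.
  rewrite /Dmx /sqrt_diag tr_mxdiag3.
  under eq_bigr do rewrite tr_sandwich.
  have := congr1 (Lf (yext y)) hid.
  rewrite LfC hy0 mulr1 LfD !Lf_sum.
  rewrite [\sum_(j < l) _]big1 ?addr0.
    move=> ->; apply: eq_bigr => i _.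
    rewrite quadp_diag // mulr_sumr Lf_sum; apply: eq_bigr => a _.
    by rewrite -scalerAr LfZ [gx _ _ * _]mulrC LfXM !mxE sqr_sqrtr.
  move=> j _; rewrite /linp mulr_sumr Lf_sum big1 // => b _.
  rewrite -scalerAr LfZ [h j * _]mulrC LfXM.
  set d := (k - hdeg (h j))%N.
  have hb := mon_deg b.
  have [a1 [a2 [e h1 h2]]] := @msplit n _ (mon b) d d (leqnn _) ltac:(by rewrite addnn -mul2n).
  have [i1 hi1] := @mon_surj n d a1 h1.
  have [i2 hi2] := @mon_surj n d a2 h2.
  rewrite e -hi1 -hi2.
  have := congr1 (fun M : 'M[R]_(sdim n d) => M i1 i2) (hy j); rewrite /= !mxE => ->.
  by rewrite mulr0.
Qed.
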